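(* Let $(U,G,\Gamma)$ be a preuniformizer for an étale category $\mathcal B=(B,\mathbf B)$. Then: (i) For every $x\in U$, the semigroup $\mathrm{Mor}_{\mathcal B}(x,x)$ is isomorphic via $g\mapsto\Gamma(g,x)$ to the subgroup $G_x=\{g\in G\mid g*x=x\}$; in particular $\mathrm{Mor}_{\mathcal B}(x,x)$ is a group, and these groups are isomorphic as $x$ varies in a $G$-orbit. (ii) $|U|=\pi_{\mathcal B}(U)$ is open in $|\mathcal B|$, and the induced map $|\Gamma|:U/G\to|U|$ is a local homeomorphism (quotient topology on $U/G$, subspace topology on $|U|$). (iii) If $\mathcal B$ is a groupoid and $(U,G,\Gamma)$ is a local uniformizer, then $|\Gamma|:U/G\to|U|$ is injective, hence a homeomorphism.
   Context: Fix one of the ''étale classes'': (a) metrizable spaces with local homeomorphisms; (b) finite-dimensional second countable topological manifolds with local homeomorphisms; (c) finite-dimensional second countable smooth manifolds (possibly with boundary and corners) with local diffeomorphisms; (d) M-polyfolds with local sc-diffeomorphisms; spaces/maps in it are étale spaces/maps. An étale category $\mathcal B=(B,\mathbf B)$ is a topological category whose object and morphism spaces are étale spaces and whose source, target, unit and composition maps are étale; composition $m\circ m'$ is defined when $t(m)=s(m')$ (first $m$ then $m'$). $\mathrm{Mor}_{\mathcal B}(U_1,U_2)=s^{-1}(U_1)\cap t^{-1}(U_2)$. The realization $|\mathcal B|=B/{\sim_{\mathcal B}}$ (equivalence relation generated by existence of morphisms) has the quotient topology and quotient map $\pi_{\mathcal B}$. A preuniformizer $(U,G,\Gamma)$ for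 $\mathcal B$ consists of an open subset $U\subset B$, an étale left action $G\times U\to U$, $(g,y)\mapsto g*y$, of a finite group $G$, and an étale injection $\Gamma:G\times U\to\mathrm{Mor}_{\mathcal B}(U,U)$ such that (a) $s(\Gamma(g,y))=y$, $t(\Gamma(g,y))=g*y$, $\Gamma(hg,y)=\Gamma(g,y)\circ\Gamma(h,g*y)$; (b) $\Gamma(G\times U)$ contains every connected component of $\mathrm{Mor}_{\mathcal B}(U,U)$ containing a morphism $m$ with $s(m)=t(m)$; (c) the induced map $|\Gamma|:U/G\to|\mathcal B|$ is locally injective and $\sup_{p\in|U|}\#\{[x]\in U/G: \pi_{\mathcal B}(x)=p\}<\infty$. If $\mathcal B$ is a groupoid and $\Gamma$ is surjective onto $\mathrm{Mor}_{\mathcal B}(U,U)$, $(U,G,\Gamma)$ is called a local uniformizer. *)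

(* Defs.v *)
From HB Require Import structures.
From mathcomp Require Import all_boot all_order all_algebra all_fingroup.
From mathcomp Require Import all_classical all_reals.
From mathcomp Require Import topology.
From Stdlib Require Import Relations.Relation_Operators.

Set Implicit Arguments.
Unset Strict Implicit.
Unset Printing Implicit Defensive.

Local Open Scope classical_set_scope.
Local Open Scope quotient_scope.

Definition rel_open {T : topologicalType} (A' S : set T) : Prop :=
  exists O : set T, open O /\ S = O `&` A'.

(* f is a local homeomorphism from the subspace A of T to the subspace A' of T':
   f maps A into A', f|A is continuous, and every x in A has an open
   neighbourhood N such that f is injective on A `&` N and maps relatively open
   subsets of A `&` N onto relatively open subsets of A' (so f restricted to
   A `&` N is a homeomorphism onto a relatively open subset of A'). *)
Definition loc_homeo {T T' : topologicalType} (A : set T) (A' : set T')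
    (f : T -> T') : Prop :=
  [/\ (forall x, A x -> A' (f x)),
      {within A, continuous f} &
      forall x, A x -> exists N : set T, [/\ open N, N x,
         {in A `&` N &, injective f} &
         forall V : set T, open V -> rel_open A' (f @` (A `&` N `&` V))]].

Definition homeo_onto {T T' : topologicalType} (A' : set T') (f : T -> T') : Prop :=
  [/\ continuous f, injective f, f @` setT = A' &
      forall V : set T, open V -> rel_open A' (f @` V)].

(* An abstract "étale class": a class of spaces (given as subsets of
   topological spaces, with the subspace topology) and of maps between them,
   in which every étale map is a local homeomorphism.  Each of the four
   classes (a)-(d) of the paper is an instance. *)
Record etale_class := EtaleClass {
  ec_space : forall T : topologicalType, set T -> Prop;
  ec_map : forall (T T' : topologicalType), set T -> set T' -> (T -> T') -> Prop;
  ec_map_loc_homeo : forall (T T' : topologicalType) (A : set T) (A' : set T')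
      (f : T -> T'), ec_map A A' f -> loc_homeo A A' f
}.

(* An étale category over the étale class E.  Composition [comp m m'] means
   "first m then m'" and is defined (meaningful) when t m = s m'. *)
Definition composable {B Mor : Type} (s t : Mor -> B) : set (Mor * Mor) :=
  [set p | t p.1 = s p.2].

Definition etale_category (E : etale_class) (B Mor : topologicalType)
    (s t : Mor -> B) (e : B -> Mor) (comp : Mor -> Mor -> Mor) : Prop :=
  [/\
      (forall x, s (e x) = x /\ t (e x) = x),
      (forall m m', t m = s m' -> s (comp m m') = s m /\ t (comp m m') = t m'),
      (forall m m' m'', t m = s m' -> t m' = s m'' ->
          comp (comp m m') m'' = comp m (comp m' m'')),
      (forall m, comp (e (s m)) m = m /\ comp m (e (t m)) = m) &
      [/\ [/\ ec_space E (@setT B), ec_space E (@setT Mor) &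
          ec_space E (composable s t)],
          ec_map E setT setT s /\ ec_map E setT setT t,
          ec_map E setT setT e &
          ec_map E (composable s t) setT (fun p => comp p.1 p.2)]].

Definition is_groupoid {B Mor : Type} (s t : Mor -> B) (e : B -> Mor)
    (comp : Mor -> Mor -> Mor) : Prop :=
  forall m, exists m', [/\ t m = s m', t m' = s m,
                          comp m m' = e (s m) & comp m' m = e (t m)].

Definition MorS {B Mor : Type} (s t : Mor -> B) (U1 U2 : set B) : set Mor :=
  [set m | U1 (s m) /\ U2 (t m)].

Section GenEquiv.
Variables (T : choiceType) (R : T -> T -> Prop).
Definition gen_rel (x y : T) : bool := `[< clos_refl_sym_trans T R x y >].
Lemma gen_rel_refl : reflexive gen_rel.
Proof. by move=> x; apply/asboolP; apply: rst_refl. Qed.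
Lemma gen_rel_sym : symmetric gen_rel.
Proof.
by move=> x y; apply/asboolP/asboolP; apply: rst_sym.
Qed.
Lemma gen_rel_trans : transitive gen_rel.
Proof.
move=> y x z /asboolP Hxy /asboolP Hyz; apply/asboolP.
exact: rst_trans Hxy Hyz.
Qed.
Canonical gen_equiv := EquivRel gen_rel gen_rel_refl gen_rel_sym gen_rel_trans.
End GenEquiv.

Definition quot_space (T : topologicalType) (R : T -> T -> Prop) : topologicalType :=
  quotient_topology {eq_quot gen_equiv R}.

Definition realization {B Mor : topologicalType} (s t : Mor -> B) : topologicalType :=
  quot_space (fun x y : B => exists m, s m = x /\ t m = y).

Definition pi_B {B Mor : topologicalType} (s t : Mor -> B) : B -> realization s t :=
  fun x => \pi_(realization s t) x.

Definition orbit_space {B : topologicalType} (G : finGroupType) (U : set B)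
    (act : G -> B -> B) : topologicalType :=
  quot_space (fun y z : U => exists g : G, act g (set_val y) = set_val z).

Definition Gamma_bar {B Mor : topologicalType} (s t : Mor -> B)
    (G : finGroupType) (U : set B) (act : G -> B -> B)
    (q : orbit_space U act) : realization s t :=
  pi_B s t (set_val (generic_quotient.repr q)).

Definition preuniformizer (E : etale_class) {B Mor : topologicalType}
    (s t : Mor -> B) (e : B -> Mor) (comp : Mor -> Mor -> Mor)
    (U : set B) (G : finGroupType) (act : G -> B -> B)
    (Gamma : G -> B -> Mor) : Prop :=
  [/\ open U,
      (* étale left action of G on U (G discrete, so étaleness of
         G x U -> U means étaleness of each y |-> g * y) *)
      [/\ (forall g y, U y -> U (act g y)),
          (forall y, U y -> act 1%g y = y),
          (forall g h y, U y -> act (g * h)%g y = act g (act h y)) &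
          (forall g, ec_map E U U (act g))],
      ((forall g, ec_map E U (MorS s t U U) (Gamma g)) /\
          (forall g h y z, U y -> U z -> Gamma g y = Gamma h z -> g = h /\ y = z)),
      (forall g h y, U y ->
          [/\ s (Gamma g y) = y, t (Gamma g y) = act g y &
              Gamma (h * g)%g y = comp (Gamma g y) (Gamma h (act g y))]) &
      [/\ (forall m, MorS s t U U m -> s m = t m ->
          connected_component (MorS s t U U) m
            `<=` [set Gamma g y | g in setT & y in U]) &
      ((forall q : orbit_space U act, exists N : set (orbit_space U act),
            [/\ open N, N q & {in N &, injective (@Gamma_bar B Mor s t G U act)}]) /\
       exists n : nat, forall (p : realization s t) (l : seq (orbit_space U act)),
          uniq l -> (forall q, q \in l -> @Gamma_bar B Mor s t G U act q = p) ->
          (size l <= n)%N)]].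

(* Main.v *)
Require Import Defs.
From HB Require Import structures.
From mathcomp Require Import all_boot all_order all_algebra all_fingroup.
From mathcomp Require Import all_classical all_reals.
From mathcomp Require Import topology.
From Stdlib Require Import Relations.Relation_Operators Relations.Operators_Properties.

Local Open Scope classical_set_scope.
Local Open Scope quotient_scope.

Lemma piB_eqP (B Mor : topologicalType) (s t : Mor -> B) x y :
  pi_B s t x = pi_B s t y <->
  clos_refl_sym_trans B (fun x y : B => exists m, s m = x /\ t m = y) x y.
Proof.
split; first by rewrite /pi_B => /eqquotP /asboolP.
by move=> H; rewrite /pi_B; apply/eqquotP; apply/asboolP.
Qed.

Lemma piB_step (B Mor : topologicalType) (s t : Mor -> B) m :
  pi_B s t (s m) = pi_B s t (t m).
Proof. by apply/piB_eqP; apply: rst_step; exists m. Qed.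

Lemma open_map_loc_homeo (T T' : topologicalType) (f : T -> T') :
  loc_homeo setT setT f -> forall W, open W -> open (f @` W).
Proof.
move=> [_ _ H] W oW; rewrite openE => _ [x Wx <-].
have [N [oN Nx _ HV]] := H x I.
have [O [oO EO]] := HV W oW.
have : (f @` (setT `&` N `&` W)) (f x) by exists x.
rewrite EO => -[Ofx _].
apply: (@filterS _ _ _ O); last by apply: open_nbhs_nbhs.
move=> z Oz; have : (f @` (setT `&` N `&` W)) z by rewrite EO.
by case=> w [[_ _] Ww] <-; exists w.
Qed.

Lemma cont_loc_homeo (T T' : topologicalType) (f : T -> T') :
  loc_homeo setT setT f -> continuous f.
Proof. by move=> [_ H _]; apply/continuous_subspace_setT. Qed.

Lemma sat_open (B Mor : topologicalType) (s t : Mor -> B) :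
  continuous s -> continuous t ->
  (forall W, open W -> open (s @` W)) -> (forall W, open W -> open (t @` W)) ->
  forall W, open W -> open (pi_B s t @` W).
Proof.
move=> cs ct os ot W oW.
change (open (\pi_(realization s t) @^-1` (pi_B s t @` W))).
set S := (X in open X).
have SE z : S z <-> exists2 x, W x & pi_B s t x = pi_B s t z.
  by split=> [[x Wx E]|[x Wx E]]; exists x.
rewrite openE => y Sy.
have [x Wx E] := (SE y).1 Sy.
have H := clos_rst_rstn1 _ _ _ _ (proj1 (piB_eqP _ _ _ _ _ _) E); clear E Sy.
suff : exists O, [/\ open O, O y & O `<=` S].
  move=> [O [oO Oy OS]]; apply: (@filterS _ _ _ O) => //.
  exact: open_nbhs_nbhs.
elim: H => [|a b Hab _ [O [oO Oa OS]]]; first by exists W; split => // z Wz; apply/SE; exists z.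
case: Hab => -[m [sm tm]].
- exists (t @` (s @^-1` O)); split.
  + by apply: ot; move/continuousP: cs; apply.
  + by exists m => //=; rewrite sm.
  + move=> _ [m' Om' <-]; have /SE [x' Wx' E] := OS _ Om'.
    by apply/SE; exists x' => //; rewrite E piB_step.
- exists (s @` (t @^-1` O)); split.
  + by apply: os; move/continuousP: ct; apply.
  + by exists m => //=; rewrite tm.
  + move=> _ [m' Om' <-]; have /SE [x' Wx' E] := OS _ Om'.
    by apply/SE; exists x' => //; rewrite E piB_step.
Qed.
Theorem mainTheorem3 (E : etale_class) (B Mor : topologicalType)
    (s t : Mor -> B) (e : B -> Mor) (comp : Mor -> Mor -> Mor)
    (U : set B) (G : finGroupType) (act : G -> B -> B) (Gamma : G -> B -> Mor)
    (HB : etale_category E s t e comp)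
    (HU : preuniformizer E s t e comp U act Gamma) :
  (* (i) Mor_B(x,x) ~ G_x via g |-> Gamma(g,x), where Mor_B(x,x) carries the
     multiplication m . m' := comp m' m ("first m', then m"). *)
  (forall x, U x ->
     [/\ (forall g, act g x = x -> s (Gamma g x) = x /\ t (Gamma g x) = x),
         (forall g h, act g x = x -> act h x = x -> Gamma g x = Gamma h x -> g = h),
         (forall m, s m = x -> t m = x -> exists2 g, act g x = x & Gamma g x = m),
         (forall g h, act g x = x -> act h x = x ->
             Gamma (h * g)%g x = comp (Gamma g x) (Gamma h x)) &
         (* in particular Mor_B(x,x) is a group (with unit e x) *)
         (forall m, s m = x -> t m = x ->
             exists m', [/\ s m' = x, t m' = x, comp m m' = e x & comp m' m = e x])])
  /\
  (* ... and these groups are isomorphic along G-orbits *)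
  (forall x (g : G), U x ->
     exists phi : Mor -> Mor,
       [/\ (forall m, s m = x -> t m = x ->
               s (phi m) = act g x /\ t (phi m) = act g x),
           (forall m m', s m = x -> t m = x -> s m' = x -> t m' = x ->
               phi m = phi m' -> m = m'),
           (forall m', s m' = act g x -> t m' = act g x ->
               exists m, [/\ s m = x, t m = x & phi m = m']) &
           (forall m m', s m = x -> t m = x -> s m' = x -> t m' = x ->
               phi (comp m m') = comp (phi m) (phi m'))])
  /\
  (* (ii) |U| is open in |B| and |Gamma| : U/G -> |U| is a local homeomorphism *)
  (open (pi_B s t @` U) /\
   loc_homeo setT (pi_B s t @` U) (@Gamma_bar B Mor s t G U act))
  /\
  (* (iii) for a local uniformizer of a groupoid, |Gamma| is injective, hence a
     homeomorphism U/G -> |U| *)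
  (is_groupoid s t e comp ->
   (forall m, MorS s t U U m -> exists g y, U y /\ Gamma g y = m) ->
   injective (@Gamma_bar B Mor s t G U act) /\
   homeo_onto (pi_B s t @` U) (@Gamma_bar B Mor s t G U act)).
Proof.
have [Hse Hst Hassoc Hunit [_ [Hs Ht] He Hc]] := HB.
have [HUo [HactU Hact1 HactM _] [_ HGinj] Ha [Hb [Hc1 Hc2]]] := HU.
have actVK x (g : G) : U x -> act g^-1%g (act g x) = x.
  by move=> Ux; rewrite -HactM // mulVg Hact1.
have surj x m : U x -> s m = x -> t m = x -> exists2 g, act g x = x & Gamma g x = m.
  move=> Ux sm tm.
  have Mm : MorS s t U U m by split; rewrite ?sm ?tm.
  have [g _ [y Uy Em]] := Hb m Mm (etrans sm (esym tm)) m (connected_component_refl Mm).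
  have [sG tG _] := Ha g g y Uy.
  have yx : y = x by rewrite -sm -Em sG.
  subst y; exists g; last exact: Em.
  by rewrite -[RHS]tm -Em tG.
have G1 x : U x -> Gamma 1%g x = e x.
  move=> Ux; have [se te] := Hse x.
  have [k kx Ek] := surj x (e x) Ux se te.
  have [_ t1 Ea1] := Ha 1%g k x Ux.
  rewrite Hact1 // mulg1 Ek in Ea1.
  have := (Hunit (Gamma 1%g x)).2; rewrite t1 Hact1 // => Ea2.
  by rewrite Ea1 Ea2.
have Gst (g : G) x : U x -> s (Gamma g x) = x /\ t (Gamma g x) = act g x.
  by move=> Ux; have [? ? _] := Ha g g x Ux.
have Gcomp (g h : G) x : U x -> act g x = x -> Gamma (h * g)%g x = comp (Gamma g x) (Gamma h x).
  by move=> Ux gx; have [_ _ ->] := Ha g h x Ux; rewrite gx.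
have actV x (g : G) : U x -> act g x = x -> act g^-1%g x = x.
  by move=> Ux gx; rewrite -{1}gx actVK.
split.
  move=> x Ux; split.
  - by move=> g gx; have [-> ->] := Gst g x Ux; rewrite gx.
  - by move=> g h _ _ Eq; have [] := HGinj g h x x Ux Ux Eq.
  - by move=> m sm tm; apply: surj.
  - by move=> g h gx _; apply: Gcomp.
  - move=> m sm tm; have [g gx <-] := surj x m Ux sm tm.
    have gVx := actV x g Ux gx.
    have [sV tV] := Gst g^-1%g x Ux.
    exists (Gamma g^-1%g x); split => //; first by rewrite tV.
      by rewrite -Gcomp // mulVg G1.
    by rewrite -Gcomp // mulgV G1.
split.
  move=> x g Ux.
  pose hof m := xget 1%g (fun h => act h x = x /\ Gamma h x = m).
  have hofE h : act h x = x -> hof (Gamma h x) = h.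
    move=> hx; have [] := xgetPex 1%g (ex_intro (fun h0 => act h0 x = x /\ Gamma h0 x = Gamma h x) h (conj hx erefl)).
    by move=> _ Eq; have [] := HGinj _ _ _ _ Ux Ux Eq.
  have Ugx := HactU g x Ux.
  have conjact h : act h x = x -> act (g * h * g^-1)%g (act g x) = act g x.
    move=> hx; rewrite HactM // HactM ?actVK ?hx //.
  exists (fun m => Gamma (g * hof m * g^-1)%g (act g x)); split.
  - move=> m sm tm; have [h hx <-] := surj x m Ux sm tm; rewrite hofE //.
    by have [-> ->] := Gst (g * h * g^-1)%g _ Ugx; rewrite conjact.
  - move=> m m' sm tm sm' tm'.
    have [h hx <-] := surj x m Ux sm tm; have [h' hx' <-] := surj x m' Ux sm' tm'.
    rewrite !hofE // => Eq; have [Ea1 _] := HGinj _ _ _ _ Ugx Ugx Eq.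
    have := congr1 (fun k => g^-1 * k * g)%g Ea1.
    by rewrite /= !mulgA !mulVg !mul1g !mulgKV => ->.
  - move=> m' sm' tm'.
    have [k kx <-] := surj _ m' Ugx sm' tm'.
    have hx : act (g^-1 * k * g)%g x = x.
      by rewrite HactM ?HactU // HactM // kx actVK.
    exists (Gamma (g^-1 * k * g)%g x); split; first by have [] := Gst (g^-1 * k * g)%g x Ux.
      by have [_ ->] := Gst (g^-1 * k * g)%g x Ux.
    by rewrite hofE // !mulgA mulgV mul1g mulgK.
  - move=> m m' sm tm sm' tm'.
    have [h hx <-] := surj x m Ux sm tm; have [h' hx' <-] := surj x m' Ux sm' tm'.
    rewrite -Gcomp // hofE; last by rewrite HactM // hx hx'.
    rewrite !hofE // -Gcomp ?conjact //.
    by rewrite !mulgA mulgKV.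
have cs : continuous s by apply: cont_loc_homeo; exact: ec_map_loc_homeo Hs.
have ct : continuous t by apply: cont_loc_homeo; exact: ec_map_loc_homeo Ht.
have os := @open_map_loc_homeo _ _ _ (ec_map_loc_homeo Hs).
have ot := @open_map_loc_homeo _ _ _ (ec_map_loc_homeo Ht).
have satO := @sat_open B Mor s t cs ct os ot.
have GbE (y : U) : @Gamma_bar B Mor s t G U act (\pi_(orbit_space U act) y) = pi_B s t (set_val y).
  rewrite /Gamma_bar.
  have : \pi_(orbit_space U act) (generic_quotient.repr (\pi_(orbit_space U act) y)) = \pi_(orbit_space U act) y by rewrite reprK.
  move/eqquotP/asboolP.
  move: (generic_quotient.repr _) => r; move: r y; apply: clos_refl_sym_trans_ind => //.
  - move=> a b [g Eg]; rewrite -Eg.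
    have [sG tG] := Gst g (set_val a) (set_valP a).
    by rewrite -{1}sG -tG piB_step.
  - by move=> a b c _ -> _ ->.
have Gimg (q : orbit_space U act) : (pi_B s t @` U) (@Gamma_bar B Mor s t G U act q).
  by exists (set_val (generic_quotient.repr q)) => //; exact: set_valP.
have Gopen (V : set (orbit_space U act)) : open V -> open (@Gamma_bar B Mor s t G U act @` V).
  move=> oV.
  have oP : open (\pi_(orbit_space U act) @^-1` V) := oV.
  case: oP => O oO EO.
  suff -> : @Gamma_bar B Mor s t G U act @` V = pi_B s t @` (O `&` U).
    by apply: satO; apply: openI.
  rewrite eqEsubset; split.
  - move=> _ [q Vq <-]; exists (set_val (generic_quotient.repr q)); last by [].
    split; last exact: set_valP.
    have : (\pi_(orbit_space U act) @^-1` V) (generic_quotient.repr q) by rewrite /= reprK.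
    by rewrite -EO.
  - move=> _ [z [Oz Uz] <-].
    pose y : U := SigSub (mem_set Uz).
    exists (\pi_(orbit_space U act) y); last by rewrite GbE.
    have : (set_val @^-1` O) y by [].
    by rewrite EO.
have relO (V : set (orbit_space U act)) : open V ->
    rel_open (pi_B s t @` U) (@Gamma_bar B Mor s t G U act @` V).
  move=> oV; exists (@Gamma_bar B Mor s t G U act @` V); split; first exact: Gopen.
  by rewrite setIidl // => _ [q _ <-]; apply: Gimg.
have Gcont : continuous (@Gamma_bar B Mor s t G U act).
  apply/quotient_continuous.
  have -> : @Gamma_bar B Mor s t G U act \o \pi_(orbit_space U act) = pi_B s t \o set_val.
    by apply: funext => y; exact: GbE.
  have cv : continuous (set_val : U -> B) by apply/continuousP => A oA; exists A.
  move=> y; apply: continuous_comp; last exact: pi_continuous.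
  exact: cv.
split.
  split; first exact: satO.
  split.
  - by move=> q _; apply: Gimg.
  - exact: (proj1 (continuous_subspace_setT _) Gcont).
  - move=> q _; have [N [oN Nq Ninj]] := Hc1 q; exists N; split => //.
      move=> a b /set_mem [_ Na] /set_mem [_ Nb]; apply: Ninj; exact: mem_set.
    by move=> V oV; apply: relO; apply: openI => //; apply: openI => //; exact: openT.
move=> Hgr Hsurj.
have Rclos a b : clos_refl_sym_trans B (fun x y : B => exists m, s m = x /\ t m = y) a b ->
    exists m, s m = a /\ t m = b.
  elim=> //.
  - by move=> x; exists (e x); apply: Hse.
  - move=> x y _ [m [sm tm]]; have [m' [tm' tm'' _ _]] := Hgr m.
    by exists m'; rewrite -tm' tm'' sm.
  - move=> x y z _ [m [sm tm]] _ [m' [sm' tm']].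
    have [H1 H2] := Hst m m' (etrans tm (esym sm')).
    by exists (comp m m'); rewrite H1 H2.
have Ginj : injective (@Gamma_bar B Mor s t G U act).
  move=> q1 q2 Eq.
  have [m [sm tm]] := Rclos _ _ (proj1 (piB_eqP _ _ _ _ _ _) Eq).
  have Mm : MorS s t U U m by split; rewrite ?sm ?tm; exact: set_valP.
  have [g [y [Uy Gm]]] := Hsurj m Mm.
  have [sG tG] := Gst g y Uy.
  rewrite -(reprK q1) -(reprK q2); apply/eqquotP; apply/asboolP; apply: rst_step.
  exists g; rewrite -tm -Gm tG; congr act.
  by rewrite -sG Gm sm.
split => //; split => //.
rewrite eqEsubset; split; first by move=> _ [q _ <-]; apply: Gimg.
move=> _ [z Uz <-]; exists (\pi_(orbit_space U act) (SigSub (mem_set Uz))) => //.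
Qed.
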